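(* Let $G=(V,E)$ be a finite graph and let $W=(w_1,\dots,w_m)$ be a selection sequence of $G$ which has the property $T_1$. Then $|W|=\alpha(G)$, where $\alpha(G)$ denotes the size of a maximum independent set of $G$.
   Context: An independent set of $G$ is a set of vertices no two of which are adjacent; $\alpha(G)$ is the maximum size of an independent set. A selection sequence of $G$ is a finite sequence $W=(w_1,\dots,w_m)$ ($m\le |V|$) of distinct vertices of $V$ such that no vertex of $W$ is adjacent to another vertex of $W$, and every vertex of $V$ is either in $W$ or adjacent to a vertex of $W$. Given a selection sequence, set $G_0=G$ and, for $1\le i\le m$, let $G_i$ be the subgraph of $G$ induced by the vertices that are neither in $\{w_1,\dots,w_i\}$ nor adjacent to any of $w_1,\dots,w_i$ (the remaining graphs). The selection sequence $W$ has the property $T_1$ if for every $1\le i\le m$ the degree of $w_i$ in $G_{i-1}$ is at most $1$. *)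

(* Defs.v *)
From mathcomp Require Import all_boot.
Set Implicit Arguments. Unset Strict Implicit. Unset Printing Implicit Defensive.

Definition simple_graph (T : finType) (e : rel T) : Prop :=
  symmetric e /\ irreflexive e.

Definition independent (T : finType) (e : rel T) (S : {set T}) : bool :=
  [forall x in S, forall y in S, ~~ e x y].

Definition alpha (T : finType) (e : rel T) : nat :=
  \max_(S : {set T} | independent e S) #|S|.

Definition remaining (T : finType) (e : rel T) (s : seq T) : {set T} :=
  [set v | (v \notin s) && ~~ has (fun w => e w v) s].

Definition selection_seq (T : finType) (e : rel T) (W : seq T) : Prop :=
  [/\ uniq W,
      {in W &, forall x y, ~~ e x y}
    & forall v : T, (v \in W) || has (fun w => e w v) W].

Definition deg_in (T : finType) (e : rel T) (R : {set T}) (v : T) : nat :=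
  #|[set u in R | e v u]|.

(* property T_1: for every 1 <= i <= m, deg_{G_{i-1}}(w_i) <= 1,
   where G_{i-1} is induced by remaining e (take (i-1) W).  Indexing from 0:
   for i < size W, w = nth W i, G = remaining e (take i W). *)
Definition property_T1 (T : finType) (e : rel T) (W : seq T) : Prop :=
  forall (i : nat) (x0 : T), i < size W ->
    deg_in e (remaining e (take i W)) (nth x0 W i) <= 1.

(* Main.v *)
Require Import Defs.
From mathcomp Require Import all_boot.

Lemma step (T : finType) (e : rel T) (W : seq T) (S : {set T}) (i : nat) (x0 : T) :
  independent e S -> i < size W ->
  deg_in e (remaining e (take i W)) (nth x0 W i) <= 1 ->
  #|S :&: remaining e (take i W)| <= (#|S :&: remaining e (take i.+1 W)|).+1.
Proof.
move=> indS lti hdeg.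
set w := nth x0 W i.
set N := [set v | (v == w) || e w v].
have sub : S :&: remaining e (take i W) \subset
   (S :&: remaining e (take i.+1 W)) :|: (S :&: remaining e (take i W) :&: N).
  apply/subsetP => v; rewrite !inE (take_nth x0 lti) mem_rcons has_rcons inE -/w.
  case/andP => -> /andP [h1 h2] /=.
  by case: (v == w); case: (e w v); rewrite ?h1 ?h2 ?orbT.
have le1 : #|S :&: remaining e (take i W) :&: N| <= 1.
  apply/card_le1_eqP => x y xA yA; move: xA yA; rewrite !inE.
  case/andP=> /andP [xS xR] xN /andP [/andP [yS yR] yN].
  move/forallP: indS => indS.
  have nexy : ~~ e x y by move/implyP: (indS x) => /(_ xS) /forallP /(_ y) /implyP; apply.
  have neyx : ~~ e y x by move/implyP: (indS y) => /(_ yS) /forallP /(_ x) /implyP; apply.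
  case/orP: xN => [/eqP xw | ewx]; case/orP: yN => [/eqP yw | ewy].
  - by rewrite xw yw.
  - by move: nexy; rewrite xw ewy.
  - by move: neyx; rewrite yw ewx.
  - move/card_le1_eqP: hdeg => /(_ x y); rewrite !inE xR yR ewx ewy; exact.
apply: leq_trans (subset_leq_card sub) _.
apply: leq_trans (leq_card_setU _ _) _; by rewrite -[X in _ <= X]addn1 leq_add2l.
Qed.

Theorem lemma1 (T : finType) (e : rel T) (W : seq T) :
  simple_graph e -> selection_seq e W -> property_T1 e W ->
  size W = alpha e.
Proof.
move=> [esym eirr] [uW indW domW] hT1.
have indWs : independent e [set x in W].
  apply/forallP => x; apply/implyP; rewrite inE => xW.
  apply/forallP => y; apply/implyP; rewrite inE => yW.
  exact: indW.
apply/eqP; rewrite eqn_leq; apply/andP; split.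
  have := @leq_bigmax_cond _ (independent e) (fun S : {set T} => #|S|) _ indWs.
  rewrite /alpha; apply: leq_trans.
  by rewrite cardsE (card_uniqP uW).
apply/bigmax_leqP => S indS.
have key : forall k, k <= size W ->
   #|S :&: remaining e (take 0 W)| <= #|S :&: remaining e (take k W)| + k.
  elim=> [|k IH] lek; first by rewrite addn0.
  apply: leq_trans (IH (ltnW lek)) _.
  case: W uW indW domW hT1 indWs lek IH => [|x0 W'] uW indW domW hT1 indWs lek IH //.
  rewrite addnS -addSn leq_add2r.
  exact: step indS lek (hT1 k x0 lek).
have := key _ (leqnn (size W)).
rewrite take_size take0.
have -> : S :&: remaining e [::] = S.
  by apply/setP => v; rewrite !inE andbT.
have -> : S :&: remaining e W = set0.
  apply/setP => v; rewrite !inE.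
  by case: (v \in S); rewrite //= -negb_or domW.
by rewrite cards0.
Qed.
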